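(* Let $\alpha>0$, let $X_{0-}$ be a real-valued random variable and let $Z$ be a continuous stochastic process with $Z_0=0$, independent of $X_{0-}$. Fix $\Delta>0$. For $\ell\in M$ set $X^\Delta_t[\ell]=X_{0-}+Z_{\Delta\lfloor t/\Delta\rfloor}-\alpha\ell_{\Delta\lfloor t/\Delta\rfloor}$, $\tau^\Delta[\ell]=\inf\{t\ge0:X^\Delta_t[\ell]\le0\}$ and $\Gamma_\Delta[\ell]_t=\mathbb{P}(\tau^\Delta[\ell]\le t)$. Let $\ell^n,\ell\in M$ with $\ell^n_{\Delta\lfloor\cdot/\Delta\rfloor}\to\ell_{\Delta\lfloor\cdot/\Delta\rfloor}$ in $M$ and $\ell^n_0=\ell_0$ for all $n$. Assume in addition that either $\operatorname{law}(X_{0-})$ is atomless or $\operatorname{law}(Z_t)$ is atomless for every $t>0$. Then $\lim_{n\to\infty}\Gamma_\Delta[\ell^n]=\Gamma_\Delta[\ell]$ in $M$.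
   Context: $M$ is the set of càdlàg increasing functions $\ell:\overline{\mathbb{R}}\to[0,1]$ ($\overline{\mathbb{R}}$ the two-point compactification of $\mathbb{R}$) with $\ell_{0-}=0$ and $\ell_\infty=1$, with the topology: $\ell^n\to\ell$ iff $\ell^n_t\to\ell_t$ for all $t\in[0,\infty]$ at which $\ell$ is continuous. *)

(* Defs.v *)
From HB Require Import structures.
From mathcomp Require Import all_boot all_order all_algebra.
From mathcomp Require Import all_classical all_reals all_analysis.
Set Implicit Arguments. Unset Strict Implicit. Unset Printing Implicit Defensive.
Import Order.TTheory GRing.Theory Num.Theory.
Import numFieldNormedType.Exports.
Local Open Scope classical_set_scope.
Local Open Scope ring_scope.

Section Defs.
Context {R : realType}.

(* The space M: càdlàg increasing l : \bar R -> [0,1] with l_{0-} = 0 and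
   l_{+oo} = 1 (left limits exist automatically for monotone functions;
   right-continuity is required at every real point). *)
Definition inM (l : \bar R -> R) : Prop :=
  {homo l : x y / (x <= y)%E >-> x <= y} /\
  (forall t, 0 <= l t <= 1) /\
  ((fun x : R => l x%:E) @ 0^'- --> 0) /\
  l +oo%E = 1 /\
  (forall t : R, (fun x : R => l x%:E) @ t^'+ --> l t%:E).

Definition convM (u : nat -> \bar R -> R) (l : \bar R -> R) : Prop :=
  (forall n, inM (u n)) /\ inM l /\
  forall t : \bar R, (0 <= t)%E -> {for t, continuous l} ->
    u n t @[n --> \oo] --> l t.

Definition floorD (Delta : R) (t : \bar R) : \bar R :=
  match t with
  | EFin r => (Delta * (Num.floor (r / Delta))%:~R)%:E
  | e => e
  end.

Variables (d : measure_display) (T : measurableType d).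

Definition XD (X0 : T -> R) (Z : R -> T -> R) (alpha Delta : R)
  (l : \bar R -> R) (t : R) (w : T) : R :=
  let s := Delta * (Num.floor (t / Delta))%:~R in
  X0 w + Z s w - alpha * l s%:E.

Definition tauD (X0 : T -> R) (Z : R -> T -> R) (alpha Delta : R)
  (l : \bar R -> R) (w : T) : \bar R :=
  ereal_inf [set t%:E | t in [set t : R | 0 <= t /\ XD X0 Z alpha Delta l t w <= 0]].

Definition GammaD (P : probability T R) (X0 : T -> R) (Z : R -> T -> R)
  (alpha Delta : R) (l : \bar R -> R) : \bar R -> R :=
  fun t => fine (P [set w | (tauD X0 Z alpha Delta l w <= t)%E]).

(* Independence of X0 and the process Z: product rule on all finite-dimensional
   cylinder events of Z (these generate sigma(Z) and form a pi-system). *)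
Definition indep_rv_process (P : probability T R) (X0 : T -> R) (Z : R -> T -> R)
  : Prop :=
  forall (n : nat) (ts : 'I_n -> R) (A : set R) (B : 'I_n -> set R),
    measurable A -> (forall i, measurable (B i)) ->
    P (X0 @^-1` A `&` [set w | forall i, B i (Z (ts i) w)]) =
    (P (X0 @^-1` A) * P [set w | forall i, B i (Z (ts i) w)])%E.

End Defs.

(* Main.v *)
Require Import Defs.
From HB Require Import structures.
From mathcomp Require Import all_boot all_order all_algebra.
From mathcomp Require Import all_classical all_reals all_analysis.
From mathcomp Require Import lra.
Import Order.TTheory GRing.Theory Num.Theory.
Import numFieldNormedType.Exports.
Local Open Scope classical_set_scope.
Local Open Scope ring_scope.

Section All.
Context (R : realType) (d : measure_display) (T : measurableType d) (P : probability T R).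

Definition sd (A B : set T) := (A `\` B) `|` (B `\` A).

Lemma Pfin (A : set T) : measurable A -> P A \is a fin_num.
Proof.
move=> mA; rewrite ge0_fin_numE ?measure_ge0 //.
exact: le_lt_trans (probability_le1 _ mA) (ltry _).
Qed.

Lemma msd A B : measurable A -> measurable B -> measurable (sd A B).
Proof. by move=> mA mB; apply: measurableU; apply: measurableD. Qed.

Lemma fineP_le A B C : measurable A -> measurable B -> measurable C ->
  A `<=` B `|` C -> fine (P A) <= fine (P B) + fine (P C).
Proof.
move=> mA mB mC sub; rewrite -lee_fin EFinD !fineK ?Pfin //.
apply: le_trans (measureU2 P mB mC).
by apply: (@le_measure _ _ _ P); rewrite ?inE //; exact: measurableU.
Qed.

Lemma fineP_ge0 A : 0 <= fine (P A).
Proof. by rewrite fine_ge0 ?measure_ge0. Qed.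

Lemma sd_cvg (An : nat -> set T) A : (forall n, measurable (An n)) -> measurable A ->
  fine (P (sd (An n) A)) @[n --> \oo] --> 0 ->
  fine (P (An n)) @[n --> \oo] --> fine (P A).
Proof.
move=> mAn mA /cvgrPdist_le h; apply/cvgrPdist_le => e e0.
have := h e e0; apply: filterS => n; rewrite sub0r normrN ger0_norm ?fineP_ge0 // => hn.
have h1 : fine (P A) <= fine (P (An n)) + fine (P (sd (An n) A)).
  apply: fineP_le => //; first exact: msd.
  move=> w Aw; case: (pselect (An n w)) => H; [by left|right; right].
  by split.
have h2 : fine (P (An n)) <= fine (P A) + fine (P (sd (An n) A)).
  apply: fineP_le => //; first exact: msd.
  move=> w Aw; case: (pselect (A w)) => H; [by left|right; left].
  by split.
rewrite ler_norml; apply/andP; split; lra.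
Qed.

Lemma sd_union (An Bn : nat -> set T) A B :
  (forall n, measurable (An n)) -> measurable A ->
  (forall n, measurable (Bn n)) -> measurable B ->
  fine (P (sd (An n) A)) @[n --> \oo] --> 0 ->
  fine (P (sd (Bn n) B)) @[n --> \oo] --> 0 ->
  fine (P (sd (An n `|` Bn n) (A `|` B))) @[n --> \oo] --> 0.
Proof.
move=> mAn mA mBn mB hA hB.
have hAB : (fun n => fine (P (sd (An n) A)) + fine (P (sd (Bn n) B))) @ \oo --> (0:R).
  by rewrite -[0]addr0; apply: cvgD.
refine (squeeze_cvgr _ (cvg_cst (0:R)) hAB); near=> n; rewrite fineP_ge0 /=.
apply: fineP_le; [apply: msd; exact: measurableU|exact: msd|exact: msd|].
move=> w [[[Aw|Bw] nAB]|[[Aw|Bw] nAB]].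
- by left; left; split => // ?; apply: nAB; left.
- by right; left; split => // ?; apply: nAB; right.
- by left; right; split => // ?; apply: nAB; left.
- by right; right; split => // ?; apply: nAB; right.
Unshelve. all: end_near.
Qed.

Lemma thresh_cvg (W : T -> R) (mW : measurable_fun setT W) c (cn : nat -> R) :
  P [set w | W w = c] = 0%E -> cn n @[n --> \oo] --> c ->
  fine (P (sd [set w | W w - cn n <= 0] [set w | W w - c <= 0])) @[n --> \oo] --> 0.
Proof.
move=> hat hc.
have mle : forall a, measurable [set w | W w - a <= 0].
  move=> a; rewrite (_ : [set w | _] = setT `&` W @^-1` `]-oo, a]).
    exact: mW (measurable_itv _).
  by apply/seteqP; split => w /=; rewrite in_itv /= subr_le0 //; case.
pose B m := [set w | `|W w - c| <= m.+1%:R^-1].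
have mB m : measurable (B m).
  rewrite (_ : B m = setT `&` W @^-1` `[c - m.+1%:R^-1, c + m.+1%:R^-1]).
    exact: mW (measurable_itv _).
  by apply/seteqP; split => w /=; rewrite in_itv /= /B /= ler_distl; [move=> ->|case].
have hB : (P \o B) m @[m --> \oo] --> P (\bigcap_m B m).
  apply: nonincreasing_cvg_mu => //.
  - exact: le_lt_trans (probability_le1 _ (mB 0%N)) (ltry _).
  - exact: bigcap_measurable.
  - move=> m1 m2 le12; apply/subsetPset => w; rewrite /B /= => h; apply: le_trans h _.
    by rewrite lef_pV2 ?posrE // ler_nat.
have capB : \bigcap_m B m = [set w | W w = c].
  apply/seteqP; split => w /=; last by move=> h m _; rewrite /B /= h subrr normr0.
  move=> h; apply: contrapT => neq.
  have : 0 < `|W w - c| by rewrite normr_gt0 subr_eq0; apply/eqP.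
  move=> /ltr_add_invr [m hm]; have := h m I; rewrite /B /=.
  by rewrite add0r in hm => h1; have := lt_le_trans hm h1; rewrite ltxx.

rewrite capB hat in hB.
apply/cvgrPdist_le => e e0.
have /fine_cvg /cvgrPdist_le /(_ e e0) [M _ hM] := hB.
have hM' := hM M (leqnn M); rewrite /= sub0r normrN ger0_norm ?fineP_ge0 // in hM'.
have /cvgrPdist_le /(_ (M.+1%:R^-1) ltac:(by [])) := hc.
apply: filterS => n hn; rewrite sub0r normrN ger0_norm ?fineP_ge0 //.
apply: le_trans hM'; apply: fine_le; rewrite ?Pfin //; first exact: msd.
apply: (@le_measure _ _ _ P); rewrite ?inE //; first exact: msd.
move=> w /= [[h1 /negP h2]|[h1 /negP h2]]; rewrite /B /=; move: h2;
  rewrite -ltNge => h2; rewrite /= in h1.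
- rewrite ger0_norm ?(ltW h2) //; apply: le_trans hn; rewrite distrC.
  apply: le_trans (ler_norm _); lra.
- rewrite ler0_norm //; apply: le_trans hn.
  apply: le_trans (ler_norm _); lra.
Qed.
Lemma sum_atomless (U V : T -> R) : measurable_fun setT U -> measurable_fun setT V ->
 (forall A B, measurable A -> measurable B ->
    P (U @^-1` A `&` V @^-1` B) = (P (U @^-1` A) * P (V @^-1` B))%E) ->
 (forall x, P (V @^-1` [set x]) = 0%E) -> forall c, P [set w | U w + V w = c] = 0%E.
Proof.
move=> mU mV hind hV c.
pose fU : {mfun T >-> R} := mfun_Sub (mem_set mU : U \in mfun).
pose fV : {mfun T >-> R} := mfun_Sub (mem_set mV : V \in mfun).
have mUV : measurable_fun setT (fun w => (U w, V w)) by exact: measurable_fun_pair.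
pose fUV : {mfun T >-> (R * R)%type} := mfun_Sub (mem_set mUV : _ \in mfun).
pose X : set (R * R) := [set p | p.1 + p.2 = c].
have mX : measurable X.
  have mf : measurable_fun setT (fun p : R * R => p.1 + p.2).
    by exact: (measurable_realfun.measurable_funD measurable_fst measurable_snd).
  rewrite (_ : X = (fun p : R * R => p.1 + p.2) @^-1` [set c]); last by [].
  by rewrite -[X in measurable X]setTI; apply: mf => //.
have hpr : forall A B, measurable A -> measurable B ->
    distribution P fUV (A `*` B) = (distribution P fU A * distribution P fV B)%E.
  move=> A B mA mB; rewrite /distribution /pushforward /= -hind //.
rewrite (_ : P _ = distribution P fUV X) //.
rewrite -(@product_measure_unique _ _ _ _ _ (distribution P fU) (distribution P fV) (distribution P fUV) hpr _ mX).
rewrite /product_measure1; apply: integral0_eq => x _ /=.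
rewrite /distribution /pushforward /=.
rewrite -(hV (c - x)); congr (P _); apply/seteqP; split => w /=.
  rewrite /xsection /X /= inE /=.
  move=> h; rewrite -h /=; lra.
rewrite /xsection /X /= inE /= => ->; lra.
Qed.

Section Tau.
Context (X0 : T -> R) (Z : R -> T -> R) (alpha Delta : R).

Definition Yk (l : \bar R -> R) (k : nat) (w : T) : R :=
  X0 w + Z (k%:R * Delta) w - alpha * l (k%:R * Delta)%:E.

Lemma XD_nat (hD : 0 < Delta) l (k : nat) w (t : R) :
  t = k%:R * Delta -> XD X0 Z alpha Delta l t w = Yk l k w.
Proof.
move=> ->; rewrite /XD /Yk mulfK ?gt_eqF // pmulrn intrKfloor -pmulrn.
by rewrite (mulrC Delta).
Qed.

Lemma floor_nat (x : R) : 0 <= x -> exists n : nat, Num.floor x = n%:Z.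
Proof.
rewrite -floor_ge0; case: (Num.floor x) => [n|n] // _; by exists n.
Qed.

Lemma tau_le (hD : 0 < Delta) l t w :
  (tauD X0 Z alpha Delta l w <= t%:E)%E <->
  exists k : nat, k%:R * Delta <= t /\ Yk l k w <= 0.
Proof.
split; last first.
  move=> [k [hk hY]]; apply: (@le_trans _ _ (k%:R * Delta)%:E); last by rewrite lee_fin.
  apply: ereal_inf_lbound; exists (k%:R * Delta) => //; split.
    by rewrite mulr_ge0 // ltW.
  by rewrite (XD_nat hD l k w _ erefl).
move=> h; apply: contrapT => hn.
have : (((Num.floor (t / Delta) + 1)%:~R * Delta)%:E <= tauD X0 Z alpha Delta l w)%E.
  apply: le_ereal_inf_tmp => _ [s [s0 hs] <-]; rewrite lee_fin.
  have [n hn'] := floor_nat _ (divr_ge0 s0 (ltW hD)).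
  have hY : Yk l n w <= 0.
    by move: hs; rewrite /XD /Yk hn' -pmulrn (mulrC Delta).
  have hnt : t < n%:R * Delta.
    by rewrite ltNge; apply/negP => hle; apply: hn; exists n.
  have h1 : Num.floor (t / Delta) + 1 <= n%:Z.
    rewrite lezD1 floor_lt_int -pmulrn ltr_pdivrMr //.
  apply: (@le_trans _ _ (n%:R * Delta)).
    by rewrite ler_pM2r // pmulrn ler_int.
  by rewrite -ler_pdivlMr // pmulrn -hn' floor_le_tmp.
move=> h2; have := le_trans h2 h; rewrite lee_fin leNgt => /negP; apply.
by rewrite -ltr_pdivrMr // lt_succ_floor.
Qed.


Definition Ak l k := [set w | Yk l k w <= 0].
Definition Et l t := [set w | exists k : nat, k%:R * Delta <= t /\ Yk l k w <= 0].

Lemma Pbnd (A : set T) : measurable A -> 0 <= fine (P A) <= 1.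
Proof.
move=> mA; rewrite fine_ge0 ?measure_ge0 //=.
by rewrite -lee_fin fineK ?probability_le1 ?Pfin.
Qed.

Section Meas.
Hypothesis mX0 : measurable_fun setT X0.
Hypothesis mZ : forall t, measurable_fun setT (Z t).

Lemma mAk l k : measurable (Ak l k).
Proof.
have mY : measurable_fun setT (Yk l k).
  apply: (measurable_realfun.measurable_funB (f := X0 \+ Z (k%:R * Delta))).
    exact: measurable_realfun.measurable_funD.
  exact: measurable_cst.
rewrite (_ : Ak l k = setT `&` Yk l k @^-1` `]-oo, 0]); last first.
  by apply/seteqP; split => w /=; rewrite in_itv /= => //; case.
exact: mY (measurable_itv `]-oo, 0]).
Qed.

Lemma mEt l t : measurable (Et l t).
Proof.
rewrite (_ : Et l t = \bigcup_(k in [set k : nat | k%:R * Delta <= t]) Ak l k).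
  by apply: bigcup_measurable => k _; exact: mAk.
by apply/seteqP; split => w /= [k [hk hY]]; exists k.
Qed.

Lemma tau_ge0 l w : (0 <= tauD X0 Z alpha Delta l w)%E.
Proof. by apply: le_ereal_inf_tmp => _ [s [s0 _] <-]; rewrite lee_fin. Qed.

Lemma tausetE (hD : 0 < Delta) l t :
  [set w | (tauD X0 Z alpha Delta l w <= t%:E)%E] = Et l t.
Proof. by apply/seteqP; split => w /= h; apply/(tau_le hD). Qed.

Lemma mtau (hD : 0 < Delta) l e : measurable [set w | (tauD X0 Z alpha Delta l w <= e)%E].
Proof.
case: e => [t| |].
- by rewrite tausetE //; exact: mEt.
- by rewrite (_ : [set _ | _] = setT) //; apply/seteqP; split => w //= _; exact: leey.
- rewrite (_ : [set _ | _] = set0) //; apply/seteqP; split => w //=.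
  by move=> h; have := le_trans (tau_ge0 l w) h.
Qed.

Lemma GammaDE (hD : 0 < Delta) l t :
  GammaD P X0 Z alpha Delta l t%:E = fine (P (Et l t)).
Proof. by rewrite /GammaD tausetE. Qed.

Lemma Et_neg (hD : 0 < Delta) l t : t < 0 -> Et l t = set0.
Proof.
move=> t0; apply/seteqP; split => w //= [k [hk _]].
have : 0 <= k%:R * Delta by rewrite mulr_ge0 // ltW.
by rewrite leNgt (le_lt_trans hk t0).
Qed.

Lemma Et_step (hD : 0 < Delta) l t x : t <= x ->
  x < (Num.floor (t / Delta) + 1)%:~R * Delta -> Et l x = Et l t.
Proof.
move=> tx xm; apply/seteqP; split => w /= [k [hk hY]]; exists k; split => //.
  have : k%:Z < Num.floor (t / Delta) + 1.
    rewrite -(ltr_int R) -pmulrn -(ltr_pM2r hD); exact: le_lt_trans hk xm.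
  rewrite ltzD1 floor_ge_int_tmp -pmulrn ler_pdivlMr //.
by apply: le_trans tx.
Qed.

Lemma inM_Gamma (hD : 0 < Delta) l : inM (GammaD P X0 Z alpha Delta l).
Proof.
split; [|split; [|split; [|split]]].
- move=> x y xy; apply: fine_le; [exact/Pfin/mtau|exact/Pfin/mtau|].
  apply: (@le_measure _ _ _ P); rewrite ?inE; [exact: mtau|exact: mtau|].
  move=> w /= h; exact: le_trans h xy.
- move=> t; exact/Pbnd/mtau.
- apply: cvg_near_cst; near=> x.
  by rewrite GammaDE // Et_neg // measure0.
- rewrite /GammaD (_ : [set _ | _] = setT) ?probability_setT //.
  by apply/seteqP; split => w //= _; exact: leey.
- move=> t; apply: cvg_near_cst; near=> x; rewrite !GammaDE // (@Et_step hD l t x) //.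
  near: x; apply: nbhs_right_lt.
  by rewrite -ltr_pdivrMr // lt_succ_floor.
Unshelve. all: end_near.
Qed.

Definition Uk l N := [set w | exists k : nat, (k <= N)%N /\ Yk l k w <= 0].

Lemma Et_Uk (hD : 0 < Delta) l t (N : nat) : Num.floor (t / Delta) = N%:Z -> Et l t = Uk l N.
Proof.
move=> hN; apply/seteqP; split => w /= [k [hk hY]]; exists k; split => //.
  by move: hk; rewrite -ler_pdivlMr // pmulrn -floor_ge_int_tmp hN lez_nat.
by rewrite -ler_pdivlMr // pmulrn -floor_ge_int_tmp hN lez_nat.
Qed.

Lemma Uk_succ l N : Uk l N.+1 = Uk l N `|` Ak l N.+1.
Proof.
apply/seteqP; split => w /=.
  move=> [k [hk hY]]; move: hk hY; rewrite leq_eqVlt => /orP[/eqP ->|hk hY]; first by right.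
  by left; exists k.
by move=> [[k [hk hY]]|hY]; [exists k; split => //; exact: leqW|exists N.+1].
Qed.

Lemma Uk0 l : Uk l 0 = Ak l 0.
Proof.
apply/seteqP; split => w /=; last by exists 0%N.
by move=> [k [hk hY]]; move: hk hY; rewrite leqn0 => /eqP ->.
Qed.

Lemma mUk l N : measurable (Uk l N).
Proof.
elim: N => [|N IH]; first by rewrite Uk0; exact: mAk.
by rewrite Uk_succ; apply: measurableU => //; exact: mAk.
Qed.

Lemma Uk_conv (ls : nat -> \bar R -> R) l :
  (forall k, fine (P (sd (Ak (ls n) k) (Ak l k))) @[n --> \oo] --> 0) ->
  forall N, fine (P (sd (Uk (ls n) N) (Uk l N))) @[n --> \oo] --> 0.
Proof.
move=> hk; elim => [|N IH]; first by rewrite Uk0; under eq_fun do rewrite Uk0; exact: hk.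
rewrite Uk_succ; under eq_fun do rewrite Uk_succ.
apply: sd_union => //; (try move=> ?); (try exact: mUk); exact: mAk.
Qed.


Lemma floorD_mid (hD : 0 < Delta) (k : nat) x :
  k%:R * Delta <= x < k%:R * Delta + Delta -> floorD Delta x%:E = (k%:R * Delta)%:E.
Proof.
move=> /andP[h1 h2]; rewrite /floorD; congr EFin.
rewrite (@floor_def _ _ k%:Z); first by rewrite -pmulrn mulrC.
rewrite -!pmulrn ler_pdivlMr // h1 /= ltr_pdivrMr //.
by rewrite -addn1 natrD mulrDl mul1r.
Qed.

Lemma cont_mid (hD : 0 < Delta) (l : \bar R -> R) (k : nat) :
  {for (k%:R * Delta + Delta / 2)%:E, continuous (fun t => l (floorD Delta t))}.
Proof.
apply: cvg_near_cst.
have hX : nbhs (k%:R * Delta + Delta / 2)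
    [set x | k%:R * Delta <= x < k%:R * Delta + Delta].
  apply: (@nbhs_interval _ _ _ (k%:R * Delta)%:E (k%:R * Delta + Delta)%:E).
  - by rewrite lte_fin ltrDl divr_gt0.
  - by rewrite lte_fin ltrD2l ltr_pdivrMr // ltr_pMr // ltr1n.
  - by move=> y; rewrite !lte_fin => h1 h2 /=; rewrite (ltW h1) h2.
have := nbhs_image_EFin hX; apply: filterS => _ [x hx <-].
rewrite !(floorD_mid hD k) //; apply/andP; split.
  by rewrite lerDl divr_ge0 // ltW.
by rewrite ltrD2l ltr_pdivrMr // ltr_pMr // ltr1n.
Qed.

Lemma lseq_cvg (hD : 0 < Delta) (ls : nat -> \bar R -> R) l :
  convM (fun n t => ls n (floorD Delta t)) (fun t => l (floorD Delta t)) ->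
  forall k : nat, ls n (k%:R * Delta)%:E @[n --> \oo] --> l (k%:R * Delta)%:E.
Proof.
move=> [_ [_ hc]] k.
have t0 : (0 <= (k%:R * Delta + Delta / 2)%:E)%E.
  by rewrite lee_fin addr_ge0 // ?mulr_ge0 ?divr_ge0 // ltW.
have hm : k%:R * Delta <= k%:R * Delta + Delta / 2 < k%:R * Delta + Delta.
  apply/andP; split.
  by rewrite lerDl divr_ge0 // ltW.
  by rewrite ltrD2l ltr_pdivrMr // ltr_pMr // ltr1n.
have e := floorD_mid hD k _ hm.
by move: (hc _ t0 (cont_mid hD l k)); rewrite [floorD _ _]e.
Qed.

Lemma Gamma_pinf (hD : 0 < Delta) l : GammaD P X0 Z alpha Delta l +oo%E = 1.
Proof.
rewrite /GammaD (_ : [set _ | _] = setT) ?probability_setT //.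
by apply/seteqP; split => w //= _; exact: leey.
Qed.

Lemma sd_same (A : set T) : sd A A = set0.
Proof. by apply/seteqP; split => w // [[]|[]]. Qed.


Lemma atom (hind : indep_rv_process P X0 Z)
  (hat : (forall x : R, P (X0 @^-1` [set x]) = 0%E) \/
   (forall t : R, 0 < t -> forall x : R, P (Z t @^-1` [set x]) = 0%E))
  s (s0 : 0 < s) c : P [set w | X0 w + Z s w = c] = 0%E.
Proof.
have hI : forall A B, measurable A -> measurable B ->
    P (X0 @^-1` A `&` Z s @^-1` B) = (P (X0 @^-1` A) * P (Z s @^-1` B))%E.
  move=> A B mA mB; have := hind 1%N (fun=> s) A (fun=> B) mA (fun=> mB).
  rewrite (_ : [set w | forall i : 'I_1, B (Z s w)] = Z s @^-1` B) //.
  by apply/seteqP; split => w /=; [move/(_ ord0)|move=> ? ?].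
case: hat => [hX|hZ].
- rewrite (_ : [set w | _] = [set w | Z s w + X0 w = c]); last first.
    by apply/seteqP; split => w /=; rewrite addrC.
  apply: sum_atomless => //.
  by move=> A B mA mB; rewrite setIC hI // muleC.
- by apply: sum_atomless => //; exact: hZ.
Qed.

Lemma main (hD : 0 < Delta) (hind : indep_rv_process P X0 Z)
  (hat : (forall x : R, P (X0 @^-1` [set x]) = 0%E) \/
   (forall t : R, 0 < t -> forall x : R, P (Z t @^-1` [set x]) = 0%E))
  (lseq : nat -> \bar R -> R) (l : \bar R -> R) :
  convM (fun (n : nat) (t : \bar R) => lseq n (floorD Delta t)) (fun t => l (floorD Delta t)) ->
  (forall n : nat, lseq n 0%:E = l 0%:E) ->
  convM (fun n : nat => GammaD P X0 Z alpha Delta (lseq n)) (GammaD P X0 Z alpha Delta l).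
Proof.
move=> hconv hl0.
split; first by move=> n; exact: inM_Gamma.
split; first exact: inM_Gamma.
move=> [t| |] t0 _ //=.
- have t0' : 0 <= t by rewrite -lee_fin.
  have [N hN] := floor_nat _ (divr_ge0 t0' (ltW hD)).
  rewrite GammaDE // (Et_Uk hD l _ _ hN).
  under eq_fun do rewrite GammaDE // (Et_Uk hD _ _ _ hN).
  apply: sd_cvg; [move=> n; exact: mUk|exact: mUk|].
  apply: Uk_conv => -[|k].
  + have e : forall n, Ak (lseq n) 0 = Ak l 0.
      by move=> n; rewrite /Ak /Yk mul0r hl0.
    under eq_fun do rewrite e sd_same measure0.
    exact: cvg_cst.
  + apply: (thresh_cvg (fun w => X0 w + Z (k.+1%:R * Delta) w)).
    * exact: measurable_realfun.measurable_funD.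
    * by apply: atom => //; rewrite mulr_gt0.
    * apply: cvgMl_tmp; exact: (lseq_cvg hD _ _ hconv).
- rewrite Gamma_pinf //; under eq_fun do rewrite Gamma_pinf //.
  exact: cvg_cst.
Qed.
End Meas.
End Tau.
End All.

Theorem lemma2p4 (R : realType) (d : measure_display) (T : measurableType d)
  (P : probability T R) (X0 : T -> R) (Z : R -> T -> R) (alpha Delta : R)
  (lseq : nat -> \bar R -> R) (l : \bar R -> R) :
  0 < alpha ->
  measurable_fun setT X0 ->
  (forall t, measurable_fun setT (Z t)) ->
  (forall w, {within `[0, +oo[, continuous (fun t => Z t w)}) ->
  (forall w, Z 0 w = 0) ->
  indep_rv_process P X0 Z ->
  0 < Delta ->
  (forall n : nat, inM (lseq n)) -> inM l ->
  convM (fun (n : nat) (t : \bar R) => lseq n (floorD Delta t)) (fun t => l (floorD Delta t)) ->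
  (forall n : nat, lseq n 0%:E = l 0%:E) ->
  ((forall x : R, P (X0 @^-1` [set x]) = 0%E) \/
   (forall t : R, 0 < t -> forall x : R, P (Z t @^-1` [set x]) = 0%E)) ->
  convM (fun n : nat => GammaD P X0 Z alpha Delta (lseq n)) (GammaD P X0 Z alpha Delta l).
Proof.
move=> _ mX0 mZ _ _ hind hD _ _ hconv hl0 hat.
by apply: main.
Qed.
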